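(* Let $G$ be a connected graph with $|V(G)| \ge 3$. If $\det(G) \neq 1$, then $\det'(G) \le \det(G)$.
   Context: A vertex subset $S$ of $G$ is a vertex determining set if the only automorphism of $G$ fixing every vertex of $S$ is the identity; the determining number $\det(G)$ is the minimum size of a vertex determining set. For a graph $G$ with at most one isolated vertex and no component isomorphic to $K_2$, an edge subset $T$ is an edge determining set if the only automorphism $\phi$ of $G$ satisfying $\{\phi(u),\phi(v)\}=\{u,v\}$ for all $\{u,v\}\in T$ is the identity; the determining index $\det'(G)$ is the minimum size of an edge determining set. *)

(* Defs.v *)
From mathcomp Require Import all_boot.
From mathcomp Require Import fingroup perm.
Set Implicit Arguments. Unset Strict Implicit. Unset Printing Implicit Defensive.

(* A finite simple graph: vertex type V, adjacency relation adj, assumed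
   symmetric and irreflexive in the theorem statement. *)
Section Defs.
Variables (V : finType) (adj : rel V).

Definition is_aut (s : {perm V}) : bool :=
  [forall u, forall v, adj (s u) (s v) == adj u v].

Definition vdet_set (S : {set V}) : bool :=
  [forall s : {perm V}, (is_aut s && [forall x in S, s x == x]) ==> (s == 1%g)].

(* Determining number: minimum size of a vertex determining set
   (setT is always one, so the default value #|V| is never used). *)
Definition det_number : nat :=
  \big[minn/#|V|]_(S : {set V} | vdet_set S) #|S|.

Definition is_edge (e : {set V}) : bool :=
  [exists u, exists v, adj u v && (e == [set u; v])].

Definition edge_set : {set {set V}} := [set e | is_edge e].

Definition edet_set (T : {set {set V}}) : bool :=
  (T \subset edge_set) &&
  [forall s : {perm V},
     (is_aut s && [forall u, forall v, ([set u; v] \in T) ==>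
                                     ([set s u; s v] == [set u; v])])
     ==> (s == 1%g)].

(* Determining index: minimum size of an edge determining set
   (edge_set itself is one under the paper's standing hypotheses). *)
Definition det_index : nat :=
  \big[minn/#|edge_set|]_(T : {set {set V}} | edet_set T) #|T|.
End Defs.

(* Main.v *)
Require Import Defs.
From mathcomp Require Import all_boot.
From mathcomp Require Import fingroup perm.

Lemma aut_inv (V : finType) (adj : rel V) (s : {perm V}) :
  is_aut adj s -> is_aut adj s^-1%g.
Proof.
move=> /forallP H; apply/forallP => u; apply/forallP => v.
by have /forallP/(_ (s^-1%g v))/eqP := H (s^-1%g u); rewrite !permKV => ->.
Qed.

Lemma aut_mul (V : finType) (adj : rel V) (s t : {perm V}) :
  is_aut adj s -> is_aut adj t -> is_aut adj (s * t)%g.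
Proof.
move=> /forallP Hs /forallP Ht; apply/forallP => u; apply/forallP => v.
rewrite !permM.
have /forallP/(_ (s v))/eqP -> := Ht (s u).
by have /forallP/(_ v)/eqP -> := Hs u.
Qed.

Lemma aut_adj (V : finType) (adj : rel V) (s : {perm V}) u v :
  is_aut adj s -> adj (s u) (s v) = adj u v.
Proof. by move=> /forallP/(_ u)/forallP/(_ v)/eqP. Qed.

Lemma orbit_all (V : finType) (adj : rel V) (adj_sym : symmetric adj)
  (connected : forall u v : V, connect adj u v)
  (P : pred {perm V}) (P1 : P 1%g)
  (Pm : forall s t, P s -> P t -> P (s * t)%g)
  (Pv : forall s, P s -> P s^-1%g)
  (Paut : forall s, P s -> is_aut adj s) v :
  (forall w, adj v w -> exists2 s, P s & s v = w) ->
  forall x, exists2 s, P s & s v = x.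
Proof.
move=> Hn.
pose a := [pred x | [exists s, P s && (s v == x)]].
have step : forall x y, adj x y -> x \in a -> y \in a.
  move=> x y Hxy /existsP [s /andP [Ps /eqP Hs]].
  have : adj v (s^-1%g y).
    by rewrite -(aut_adj V adj s v (s^-1%g y) (Paut _ Ps)) permKV Hs.
  move=> /Hn [t Pt Ht]; apply/existsP; exists (t * s)%g.
  by rewrite Pm //= permM Ht permKV.
have cl : closed adj a.
  move=> x y Hxy; apply/idP/idP; first exact: step.
  by apply: step; rewrite adj_sym.
move=> x.
have : x \in a.
  rewrite -(closed_connect cl (connected v x)) inE; apply/existsP; exists 1%g.
  by rewrite P1 /= (perm1 v).
by move=> /existsP [s /andP [Ps /eqP Hs]]; exists s.
Qed.

Lemma bigmin_le_term (I : finType) (P : pred I) (F : I -> nat) d j :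
  P j -> \big[minn/d]_(i | P i) F i <= F j.
Proof.
move=> Pj; have : j \in index_enum I by rewrite mem_index_enum.
elim: (index_enum I) => [|x r IH]; first by [].
rewrite inE big_cons => /orP [/eqP<-|/IH H].
  by rewrite Pj geq_minl.
by case: (P x) => //; rewrite geq_min H orbT.
Qed.

Lemma det_index_le (V : finType) (adj : rel V) T :
  edet_set adj T -> det_index adj <= #|T|.
Proof. by move=> H; apply: bigmin_le_term. Qed.

Lemma det_number_exists (V : finType) (adj : rel V) :
  exists2 S, vdet_set adj S & #|S| = det_number adj.
Proof.
have vT : vdet_set adj setT.
  apply/forallP => s; apply/implyP => /andP [_ /forallP H].
  by apply/eqP/permP => x; rewrite perm1; apply/eqP; have := H x; rewrite in_setT.
case: (arg_minnP (fun S : {set V} => #|S|) vT) => S HS Hmin.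
exists S => //; apply/eqP; rewrite eqn_leq; apply/andP; split.
  apply: (big_ind (fun m => #|S| <= m)); first exact: max_card.
    by move=> x y hx hy; rewrite leq_min hx hy.
  exact: Hmin.
exact: bigmin_le_term.
Qed.

Lemma pair_img (V : finType) (s : {perm V}) u w :
  u != w -> [set s u; s w] == [set u; w] ->
  ((s u == u) && (s w == w)) || ((s u == w) && (s w == u)).
Proof.
move=> nuw /eqP E.
have : s u \in [set u; w] by rewrite -E set21.
have : s w \in [set u; w] by rewrite -E set22.
rewrite !inE => /orP [] /eqP Hw /orP [] /eqP Hu.
- by move: nuw; rewrite -(perm_inj (etrans Hu (esym Hw))) eqxx.
- by rewrite Hu Hw !eqxx orbT.
- by rewrite Hu Hw !eqxx.
- by move: nuw; rewrite -(perm_inj (etrans Hu (esym Hw))) eqxx.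
Qed.

Theorem theorem4 (V : finType) (adj : rel V)
  (adj_sym : symmetric adj) (adj_irr : irreflexive adj)
  (connected : forall u v : V, connect adj u v)
  (card_V : 3 <= #|V|)
  (det_ne1 : det_number adj <> 1) :
  det_index adj <= det_number adj.
Proof.
case: (det_number_exists V adj) => S vS eS.
have aut1 : is_aut adj (1%g : {perm V}).
  by apply/forallP => u; apply/forallP => w; rewrite !perm1.
case: (set_0Vmem S) => [S0 | [v1 v1S]].
  have e0 : edet_set adj set0.
    rewrite /edet_set sub0set /=; apply/forallP => s; apply/implyP => /andP [As _].
    have /forallP/(_ s)/implyP := vS; apply; rewrite As /=.
    by apply/forallP => x; rewrite S0 inE.
  by apply: leq_trans (det_index_le V adj set0 e0) _; rewrite cards0.
have [v2 v2S v21] : exists2 v2, v2 \in S & v2 != v1.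
  have : 0 < #|S :\ v1|.
    have := cardsD1 v1 S; rewrite v1S eS => H.
    by move: det_ne1; rewrite H; case: #|S :\ v1|.
  by case/card_gt0P => x; rewrite !inE => /andP [H1 H2]; exists x.
pose P1 := fun s : {perm V} => is_aut adj s && [forall x in S :\ v1, s x == x].
have P1_1 : P1 1%g.
  by rewrite /P1 aut1; apply/forallP => x; apply/implyP => _; rewrite perm1.
have P1_m : forall s t, P1 s -> P1 t -> P1 (s * t)%g.
  move=> s t /andP [As Hs] /andP [At Ht]; rewrite /P1 aut_mul //.
  apply/forallP => x; apply/implyP => xS; rewrite permM.
  by rewrite (eqP (implyP (forallP Hs x) xS)) (eqP (implyP (forallP Ht x) xS)).
have P1_v : forall s, P1 s -> P1 s^-1%g.
  move=> s /andP [As Hs]; rewrite /P1 aut_inv //.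
  apply/forallP => x; apply/implyP => xS.
  by rewrite -{1}(eqP (implyP (forallP Hs x) xS)) permK.
have P1_a : forall s, P1 s -> is_aut adj s by move=> s /andP [].
have [u1 /andP [a1 no1]] : exists u1, adj v1 u1 && ~~ [exists s, P1 s && (s v1 == u1)].
  apply/existsP; apply: contraT => /existsPn H.
  have Hn : forall w, adj v1 w -> exists2 s, P1 s & s v1 = w.
    move=> w aw; have := H w; rewrite aw /= negbK => /existsP [s /andP [Ps /eqP Hs]].
    by exists s.
  have [s /andP [_ Hs] E] := @orbit_all V adj adj_sym connected P1 P1_1 P1_m P1_v P1_a v1 Hn v2.
  have : s v2 == v2 by apply: (implyP (forallP Hs v2)); rewrite !inE v21.
  by rewrite -{2}E (inj_eq perm_inj) (negbTE v21).
have u1v1 : v1 != u1 by apply/eqP => E; move: a1; rewrite -E adj_irr.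
pose P2 := fun s : {perm V} => is_aut adj s &&
   (((s v1 == v1) && (s u1 == u1)) || ((s v1 == u1) && (s u1 == v1))).
have [x0 x0n] : exists x, x \notin [set v1; u1].
  case: (pickP [pred x | x \notin [set v1; u1]]) => [x Hx | H0]; first by exists x.
  have : [set v1; u1] = setT.
    by apply/setP => y; have := H0 y; rewrite in_setT /= => /negbFE.
  move=> E; have := cards2 v1 u1; rewrite E cardsT u1v1 => E2.
  by move: card_V; rewrite E2.
have P2_1 : P2 1%g by rewrite /P2 aut1 !perm1 !eqxx.
have P2_m : forall s t, P2 s -> P2 t -> P2 (s * t)%g.
  move=> s t /andP [As Hs] /andP [At Ht]; rewrite /P2 aut_mul // !permM.
  by case/orP: Hs => /andP [/eqP -> /eqP ->]; case/orP: Ht => /andP [/eqP -> /eqP ->];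
    rewrite !eqxx ?orbT.
have P2_v : forall s, P2 s -> P2 s^-1%g.
  move=> s /andP [As Hs]; rewrite /P2 aut_inv //.
  have iv : forall x y, s x = y -> s^-1%g y = x by move=> x y <-; rewrite permK.
  case/orP: Hs => /andP [/eqP E1 /eqP E2].
    by rewrite (iv _ _ E1) (iv _ _ E2) !eqxx.
  by rewrite (iv _ _ E1) (iv _ _ E2) !eqxx orbT.
have claim : forall v, v \in S -> v != v1 ->
    exists u, adj v u && ~~ [exists s, P2 s && (s v == u)].
  move=> v vvS vn; apply/existsP; apply: contraT => /existsPn H.
  have P2_a : forall s, P2 s -> is_aut adj s by move=> s /andP [].
  have Hn : forall w, adj v w -> exists2 s, P2 s & s v = w.
    move=> w aw; have := H w; rewrite aw /= negbK => /existsP [s /andP [Ps /eqP Hs]].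
    by exists s.
  have Hall := @orbit_all V adj adj_sym connected P2 P2_1 P2_m P2_v P2_a v Hn.
    have [s0 P0 E0] := Hall v1; have [s1 Ps1 E1] := Hall x0.
    have Pr : P2 (s0^-1 * s1)%g by apply: P2_m => //; apply: P2_v.
    have Ex : (s0^-1 * s1)%g v1 = x0 by rewrite permM -E0 permK.
    case/andP: Pr => _; rewrite Ex.
    move: x0n; rewrite !inE negb_or => /andP [/negbTE -> /negbTE ->].
    by rewrite !andFb.
pose O2 := fun v u => [exists s, P2 s && (s v == u)].
pose f := fun v => if v == v1 then u1 else odflt v [pick u | adj v u && ~~ O2 v u].
have Hf : forall v, v \in S -> adj v (f v) && ((v != v1) ==> ~~ O2 v (f v)).
  move=> v vvS; rewrite /f; case: (eqVneq v v1) => [-> | vn] /=; first by rewrite a1.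
  case: pickP => [u /andP [au nu] | H0] /=; first by rewrite au nu.
  have [u /andP [au nu]] := claim v vvS vn.
  by move: (H0 u); rewrite /= au nu.
pose T := [set [set v; f v] | v in S].
have eT : edet_set adj T.
  apply/andP; split.
    apply/subsetP => e /imsetP [v vvS ->]; rewrite inE; apply/existsP; exists v.
    apply/existsP; exists (f v); rewrite eqxx andbT.
    by case/andP: (Hf v vvS).
  apply/forallP => s; apply/implyP => /andP [As /forallP HT].
  have HTv : forall v, v \in S -> [set s v; s (f v)] == [set v; f v].
    move=> v vvS; have /forallP/(_ (f v))/implyP := HT v; apply.
    by apply/imsetP; exists v.
  have fv1 : f v1 = u1 by rewrite /f eqxx.
  have Ps2 : P2 s.
    by rewrite /P2 As /=; have := HTv v1 v1S; rewrite fv1; apply: pair_img.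
  have fixo : forall v, v \in S -> v != v1 -> s v = v.
    move=> v vvS vn.
    have /eqP E := HTv v vvS.
    have : s v \in [set v; f v] by rewrite -E set21.
    rewrite !inE => /orP [/eqP // | /eqP Ef].
    have := Hf v vvS; rewrite vn /= => /andP [_ /existsP []].
    by exists s; rewrite Ps2 Ef eqxx.
  have Ps1 : P1 s.
    rewrite /P1 As /=; apply/forallP => x; apply/implyP; rewrite !inE => /andP [xn xS].
    by rewrite fixo.
  have sv1 : s v1 = v1.
    case/andP: Ps2 => _ /orP [/andP [/eqP -> _] // | /andP [/eqP Ef _]].
    by case/existsP: no1; exists s; rewrite Ps1 Ef eqxx.
  have /forallP/(_ s)/implyP := vS; apply; rewrite As /=.
  apply/forallP => x; apply/implyP => xS.
  by case: (eqVneq x v1) => [-> | xn]; rewrite ?sv1 ?fixo.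
apply: leq_trans (det_index_le V adj T eT) _.
by rewrite -eS; apply: leq_imset_card.
Qed.
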